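(* Let $\Gamma$ be a finitely presented group, $\Gamma = \langle S \mid R\rangle$ with $S$ a finite symmetric generating set and $R$ a finite set of relators (words in $S$), and assume that $\Gamma$ is one-ended. Let $r$ be a real number with $r > \max_{w \in R} \tfrac{|w|}{2}$, where $|w|$ denotes the word length of $w$. Then the Cayley graph of $\Gamma$ with respect to $S$ has connected spheres with constant $r$: for every integer $n \geq 0$, the set $B_{n+r} \cap B_n^{\mathrm{c},\infty}$ is connected.
   Context: For a finitely generated group $\Gamma$ and a finite set $S \subset \Gamma$ with $s \in S \Rightarrow s^{-1} \in S$ generating $\Gamma$, the Cayley graph has vertex set $\Gamma$, with $g,h$ joined by an edge whenever $gs = h$ for some $s \in S$; it carries the graph (word) metric. $B_t$ denotes the ball of radius $t$ centred at the identity element $e$ in this metric. $\Gamma$ is one-ended if, for all large $n$, the complement of $B_n$ in the Cayley graph has exactly one infinite connected component; $B_n^{\mathrm{c},\infty}$ denotes this infinite connected component of the complement $B_n^{\mathrm{c}}$ of $B_n$. A set of vertices is called connected if the subgraph of the Cayley graph induced on it is connected. The Cayley graph has connected spheres with constant $r>0$ if for all $n \geq 0$ the set $B_{n+r} \cap B_n^{\mathrm{c},\infty}$ is connected. *)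

(* Defs.v *)
From Stdlib Require Import Reals List Relations.
Import ListNotations.
Open Scope R_scope.

Record group := Group {
  carrier :> Type;
  gmul : carrier -> carrier -> carrier;
  ginv : carrier -> carrier;
  gone : carrier;
  gmulA : forall x y z, gmul x (gmul y z) = gmul (gmul x y) z;
  gmul1 : forall x, gmul gone x = x;
  gmulV : forall x, gmul (ginv x) x = gone
}.

Section Cayley.
Variable G : group.
Variable S : list G.

Definition word_in (w : list G) : Prop := Forall (fun s => In s S) w.
Definition eval (w : list G) : G := fold_right (gmul G) (gone G) w.

Definition symmetric_set : Prop := forall s, In s S -> In (ginv G s) S.

Inductive pres_step (R : list (list G)) : list G -> list G -> Prop :=
| step_free : forall u v s, In s S ->
    pres_step R (u ++ [s; ginv G s] ++ v) (u ++ v)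
| step_rel : forall u v r, In r R ->
    pres_step R (u ++ r ++ v) (u ++ v).

(* G = < S | R > : S is a finite symmetric generating set, R a finite set of
   relators (words in S) holding in G, and every word in S representing the
   identity is a consequence of R (i.e. reduces to the empty word by
   insertion/deletion of relators and of trivial relators s s^-1). *)
Definition presentation (R : list (list G)) : Prop :=
  symmetric_set /\
  (forall g : G, exists w, word_in w /\ eval w = g) /\
  (forall r, In r R -> word_in r /\ eval r = gone G) /\
  (forall w, word_in w -> eval w = gone G ->
     clos_refl_sym_trans _ (pres_step R) w []).

Definition adj (g h : G) : Prop := exists s, In s S /\ gmul G g s = h.

Definition in_ball (t : R) (g : G) : Prop :=
  exists w, word_in w /\ eval w = g /\ INR (length w) <= t.

Definition connected_in (A : G -> Prop) (x y : G) : Prop :=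
  A x /\ A y /\
  clos_refl_trans _ (fun a b => A a /\ A b /\ (adj a b \/ adj b a)) x y.

Definition connected_set (A : G -> Prop) : Prop :=
  forall x y, A x -> A y -> connected_in A x y.

Definition infinite_set (A : G -> Prop) : Prop :=
  ~ exists l : list G, forall g, A g -> In g l.

Definition ball_compl (n : nat) (g : G) : Prop := ~ in_ball (INR n) g.

Definition in_inf_comp (n : nat) (g : G) : Prop :=
  ball_compl n g /\ infinite_set (connected_in (ball_compl n) g).

Definition one_ended : Prop :=
  exists N : nat, forall n, (N <= n)%nat ->
    (exists g, in_inf_comp n g) /\
    (forall x y, in_inf_comp n x -> in_inf_comp n y ->
       connected_in (ball_compl n) x y).

Definition connected_spheres (r : R) : Prop :=
  forall n : nat,
    connected_set (fun g => in_ball (INR n + r) g /\ in_inf_comp n g).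

End Cayley.

(* Main.v *)
Require Import Defs.
From Stdlib Require Import Reals List Relations Lra Lia Bool Classical ClassicalDescription Arith.
Import ListNotations.
Open Scope R_scope.

Definition dec (P : Prop) : bool := if excluded_middle_informative P then true else false.
Lemma dec_t (P : Prop) : P -> dec P = true.
Proof. intro H; unfold dec; destruct (excluded_middle_informative P); tauto. Qed.
Lemma dec_f (P : Prop) : ~ P -> dec P = false.
Proof. intro H; unfold dec; destruct (excluded_middle_informative P); tauto. Qed.
Lemma dec_iff (P Q : Prop) : (P <-> Q) -> dec P = dec Q.
Proof. intro H; destruct (classic P) as [H0|H0].
  rewrite (dec_t P H0), (dec_t Q (proj1 H H0)); auto.
  rewrite (dec_f P H0), (dec_f Q (fun h => H0 (proj2 H h))); auto. Qed.
Lemma xorb3 a b c : xorb (xorb a b) (xorb b c) = xorb a c.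
Proof. destruct a, b, c; reflexivity. Qed.
Lemma xorb_aa a : xorb a a = false.
Proof. destruct a; reflexivity. Qed.

Section Grp.
Variable G : group.
Local Infix "⋅" := (gmul G) (at level 40, left associativity).
Local Notation e := (gone G).

Lemma mulV_r (g : G) : g ⋅ ginv G g = e.
Proof.
  rewrite <- (gmul1 G (g ⋅ ginv G g)).
  rewrite <- (gmulV G (ginv G g)) at 1.
  rewrite <- gmulA. rewrite (gmulA G (ginv G g) g (ginv G g)).
  rewrite gmulV, gmul1. apply gmulV.
Qed.

Lemma mul1_r (g : G) : g ⋅ e = g.
Proof. rewrite <- (gmulV G g). rewrite gmulA, mulV_r, gmul1. reflexivity. Qed.

Lemma eval_app u v : eval G (u ++ v) = eval G u ⋅ eval G v.
Proof. induction u as [|s u IH]; simpl. rewrite gmul1; auto. rewrite IH, gmulA; auto. Qed.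

Fixpoint invw (w : list G) : list G :=
  match w with [] => [] | s :: w' => invw w' ++ [ginv G s] end.

Lemma eval_invw w : eval G w ⋅ eval G (invw w) = e.
Proof. induction w as [|s w IH]; simpl. apply gmul1.
  rewrite eval_app; simpl. rewrite mul1_r.
  rewrite (gmulA G (s ⋅ eval G w)). rewrite <- (gmulA G s (eval G w)), IH, mul1_r. apply mulV_r.
Qed.

Fixpoint par (f : G -> G -> bool) (g : G) (w : list G) : bool :=
  match w with [] => false | s :: w' => xorb (f g (g ⋅ s)) (par f (g ⋅ s) w') end.

Lemma par_app f g u v : par f g (u ++ v) = xorb (par f g u) (par f (g ⋅ eval G u) v).
Proof. revert g; induction u as [|s u IH]; intro g; simpl.
  rewrite mul1_r; auto.
  rewrite IH, gmulA, xorb_assoc; auto. Qed.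

Lemma prefix_cons (s : G) w u t : s :: w = u ++ t -> u = [] \/ exists u', u = s :: u' /\ w = u' ++ t.
Proof. destruct u as [|s' u']; simpl; intro H. left; auto. right; injection H; intros; subst; eauto. Qed.


Lemma eval_nil : eval G [] = e. Proof. reflexivity. Qed.
Lemma eval_cons s w : eval G (s :: w) = s ⋅ eval G w. Proof. reflexivity. Qed.
Lemma par_nil f g : par f g [] = false. Proof. reflexivity. Qed.
Lemma par_cons f g s w : par f g (s :: w) = xorb (f g (g ⋅ s)) (par f (g ⋅ s) w). Proof. reflexivity. Qed.
Lemma length_invw w : length (invw w) = length w.
Proof. induction w; simpl; auto. rewrite length_app; simpl; lia. Qed.

Lemma inv_unique a b c : a ⋅ b = e -> b ⋅ c = e -> a = c.
Proof. intros H1 H2. rewrite <- (mul1_r a), <- H2, gmulA, H1, gmul1; auto. Qed.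

Lemma pre_0 (P : G -> Prop) g w : (forall u t, w = u ++ t -> P (g ⋅ eval G u)) -> P g.
Proof. intro H. specialize (H [] w eq_refl). rewrite eval_nil, mul1_r in H; auto. Qed.
Lemma pre_1 (P : G -> Prop) g s w : (forall u t, s :: w = u ++ t -> P (g ⋅ eval G u)) -> P (g ⋅ s).
Proof. intro H. specialize (H [s] w eq_refl). rewrite eval_cons, eval_nil, mul1_r in H; auto. Qed.
Lemma pre_shift (P : G -> Prop) g s w : (forall u t, s :: w = u ++ t -> P (g ⋅ eval G u)) ->
  forall u t, w = u ++ t -> P ((g ⋅ s) ⋅ eval G u).
Proof. intros H u t E. specialize (H (s :: u) t). rewrite E in H.
  rewrite eval_cons, gmulA in H. apply H; auto. Qed.

Section Cay.
Variable S : list G.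

Definition stp (P : G -> Prop) a b := P a /\ P b /\ (adj G S a b \/ adj G S b a).

Lemma conn_refl P a : P a -> connected_in G S P a a.
Proof. intro; repeat split; auto. apply rt_refl. Qed.

Lemma rt_sym P a b : clos_refl_trans _ (stp P) a b -> clos_refl_trans _ (stp P) b a.
Proof. induction 1. apply rt_step. destruct H as [? [? ?]]; repeat split; tauto.
  apply rt_refl. eapply rt_trans; eauto. Qed.

Lemma conn_sym P a b : connected_in G S P a b -> connected_in G S P b a.
Proof. intros [? [? H]]; repeat split; auto. apply (rt_sym P); exact H. Qed.

Lemma conn_trans P a b c : connected_in G S P a b -> connected_in G S P b c -> connected_in G S P a c.
Proof. intros [? [? H]] [? [? H']]; repeat split; auto. eapply rt_trans; eauto. Qed.

Lemma conn_step P a b c : connected_in G S P a b -> stp P b c -> connected_in G S P a c.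
Proof. intros [? [? H]] Hs; repeat split; auto. apply Hs. eapply rt_trans; eauto. apply rt_step; auto. Qed.

Lemma conn_mono (P Q : G -> Prop) a b : (forall v, P v -> Q v) -> connected_in G S P a b -> connected_in G S Q a b.
Proof. intros HPQ [H1 [H2 H]]; repeat split; auto. clear H1 H2. induction H. apply rt_step.
  destruct H as [? [? ?]]; split; [auto|split; auto]. apply rt_refl. eapply rt_trans; eauto. Qed.

Lemma conn_restrict (P Q : G -> Prop) a b : connected_in G S P a b ->
  (forall v, P v -> connected_in G S P v b -> Q v) ->
  connected_in G S (fun v => P v /\ Q v) a b.
Proof. intros [Ha [Hb H]] HQ. apply clos_rt_rt1n in H. induction H.
  - apply conn_refl. split; auto. apply HQ; auto. apply conn_refl; auto.
  - destruct H as [Hx [Hy Hadj]].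
    assert (Hc : connected_in G S (fun v => P v /\ Q v) y z) by auto.
    apply conn_sym. eapply conn_step. apply conn_sym. exact Hc.
    repeat split; auto. destruct Hc; tauto. apply HQ; auto. repeat split; auto.
    eapply rt_trans. apply rt_step. repeat split; eauto. apply clos_rt1n_rt; auto. tauto.
Qed.


Definition ballN (k : nat) (g : G) := exists w, word_in G S w /\ eval G w = g /\ (length w <= k)%nat.

Lemma ballN_iff k g : in_ball G S (INR k) g <-> ballN k g.
Proof. split; intros [w [H1 [H2 H3]]]; exists w; repeat split; auto.
  apply INR_le; auto. apply le_INR; auto. Qed.

Lemma in_ball_mono t t' g : t <= t' -> in_ball G S t g -> in_ball G S t' g.
Proof. intros H [w [H1 [H2 H3]]]; exists w; repeat split; auto. lra. Qed.

Lemma ballN_mono k k' g : (k <= k')%nat -> ballN k g -> ballN k' g.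
Proof. intros H [w [H1 [H2 H3]]]; exists w; repeat split; auto. lia. Qed.

Lemma adj_sym_mul a b : symmetric_set G S -> adj G S b a -> exists s, In s S /\ a ⋅ s = b.
Proof. intros Hsym [s [Hs E]]. exists (ginv G s); split. apply Hsym; auto.
  subst a. rewrite <- gmulA, mulV_r, mul1_r. auto. Qed.

Lemma ball_adj k a b : symmetric_set G S -> ballN k a -> (adj G S a b \/ adj G S b a) -> ballN (Datatypes.S k) b.
Proof. intros Hsym [w [H1 [H2 H3]]] Had.
  assert (Hx : exists s, In s S /\ a ⋅ s = b).
  { destruct Had as [Had|Had]. exact Had. apply adj_sym_mul; auto. }
  destruct Hx as [s [Hs E]]. exists (w ++ [s]); repeat split.
  apply Forall_app; split; auto. rewrite eval_app; simpl. rewrite mul1_r, H2; auto.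
  rewrite length_app; simpl; lia. Qed.

Lemma ball_finite k : exists l, forall g, ballN k g -> In g l.
Proof. induction k as [|k [l IH]].
  - exists [e]. intros g [w [H1 [H2 H3]]]. destruct w; simpl in *; [subst; auto | lia].
  - exists (l ++ flat_map (fun s => map (fun h => s ⋅ h) l) S).
    intros g [w [H1 [H2 H3]]]. apply in_or_app.
    destruct w as [|s w].
    + left. apply IH. exists []; repeat split; auto. simpl; lia.
    + right. apply in_flat_map. inversion H1; subst. exists s; split; auto.
      simpl. apply (in_map (fun h => s ⋅ h)). apply IH. exists w; repeat split; auto. simpl in H3; lia.
Qed.

Lemma bc_mono n m g : (n <= m)%nat -> ball_compl G S m g -> ball_compl G S n g.
Proof. intros H Hm Hn. apply Hm. apply ballN_iff. apply ballN_iff in Hn. eapply ballN_mono; eauto. Qed.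


Lemma gather (Q : G -> G -> Prop) (L : list G) :
  (forall v, In v L -> exists l, forall w, Q v w -> In w l) ->
  exists l, forall v w, In v L -> Q v w -> In w l.
Proof. induction L as [|a L IH]; intro H.
  - exists []. intros v w [].
  - destruct (H a (or_introl eq_refl)) as [la Hla].
    destruct IH as [l Hl]. intros v Hv; apply H; right; auto.
    exists (la ++ l). intros v w [<-|Hv] Hq; apply in_or_app; [left|right]; eauto.
Qed.

Lemma last_exit n m a w : symmetric_set G S ->
  clos_refl_trans _ (stp (ball_compl G S n)) a w -> ball_compl G S m w ->
  (ball_compl G S m a /\ connected_in G S (ball_compl G S m) a w) \/
  exists v, ball_compl G S m v /\ ballN (Datatypes.S m) v /\
    connected_in G S (ball_compl G S n) a v /\ connected_in G S (ball_compl G S m) v w.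
Proof. intros Hsym H Hw. apply clos_rt_rt1n in H. induction H as [a | a a1 w Hs Hr IH].
  - left. split; auto. apply conn_refl; auto.
  - specialize (IH Hw). destruct Hs as [Ha [Ha1 Hadj]].
    destruct IH as [[Hm1 Hc] | [v [Hv1 [Hv2 [Hv3 Hv4]]]]].
    + destruct (classic (ball_compl G S m a)) as [Hma | Hma].
      * left. split; auto. apply conn_sym. eapply conn_step. apply conn_sym; exact Hc.
        split; auto. split; auto. tauto.
      * right. exists a1. split; auto. split.
        { apply NNPP in Hma. apply ballN_iff in Hma. eapply ball_adj; eauto. }
        split; auto. eapply conn_step. apply conn_refl; auto. split; auto.
    + right. exists v. split; [auto|split; [auto|split; [|auto]]].
      eapply conn_trans; eauto. eapply conn_step. apply conn_refl; auto. split; auto.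
Qed.

Lemma uniq n x y : symmetric_set G S -> one_ended G S ->
  in_inf_comp G S n x -> in_inf_comp G S n y -> connected_in G S (ball_compl G S n) x y.
Proof.
  intros Hsym [N HN] Hx Hy.
  set (m := Nat.max N n).
  destruct (HN m (Nat.le_max_l _ _)) as [[z Hz] Hu].
  assert (Hnm : (n <= m)%nat) by apply Nat.le_max_r.
  assert (claim : forall a, in_inf_comp G S n a -> connected_in G S (ball_compl G S n) a z).
  { intros a [Ha Hinf]. apply NNPP; intro Hnc. apply Hinf.
    destruct (ball_finite (Datatypes.S m)) as [lb Hlb].
    assert (Hl : exists l, forall v w, In v (a :: lb) ->
       (connected_in G S (ball_compl G S n) a v /\ connected_in G S (ball_compl G S m) v w) -> In w l).
    { apply gather. intros v _.
      destruct (classic (connected_in G S (ball_compl G S n) a v /\ ball_compl G S m v)) as [[Hav Hmv] | Hno].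
      - destruct (classic (infinite_set G (connected_in G S (ball_compl G S m) v))) as [Hi|Hi].
        + exfalso. apply Hnc.
          assert (Hvz : connected_in G S (ball_compl G S m) v z) by (apply Hu; [split; auto | auto]).
          eapply conn_trans; eauto. eapply conn_mono; [|eauto]. intros; eapply bc_mono; eauto.
        + apply NNPP in Hi. destruct Hi as [l Hl]. exists l. intros w [_ Hw]. apply Hl; auto.
      - exists []. intros w [H1 H2]. exfalso. apply Hno. split; auto. destruct H2; auto. }
    destruct Hl as [l Hl]. exists (lb ++ l). intros w Haw. apply in_or_app.
    destruct (classic (ball_compl G S m w)) as [Hmw|Hmw].
    - right. destruct Haw as [_ [_ Hp]].
      destruct (last_exit n m a w Hsym Hp Hmw) as [[Hma Hc] | [v [Hv1 [Hv2 [Hv3 Hv4]]]]].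
      + apply (Hl a w); simpl; auto. split; auto. apply conn_refl; auto.
      + apply (Hl v w); simpl; auto.
    - left. apply Hlb. apply NNPP in Hmw. apply ballN_iff in Hmw. eapply ballN_mono; [|eauto]. lia. }
  eapply conn_trans. apply claim; auto. apply conn_sym, claim; auto.
Qed.


Lemma loop_dist w g u0 t0 u1 t1 : symmetric_set G S -> word_in G S w -> eval G w = e ->
  w = u0 ++ t0 -> w = u1 ++ t1 ->
  exists m, word_in G S m /\ (g ⋅ eval G u0) ⋅ eval G m = g ⋅ eval G u1 /\ (2 * length m <= length w)%nat.
Proof.
  intros Hsym Hw Hev E0 E1.
  assert (Hwi : forall v, word_in G S v -> word_in G S (invw v)).
  { induction v as [|s v IH]; intro Hv; simpl. constructor. inversion Hv; subst.
    apply Forall_app; split; [apply IH; exact H2 | constructor; [apply Hsym; auto | constructor]]. }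
  assert (E : u0 ++ t0 = u1 ++ t1) by congruence.
  destruct (app_eq_app _ _ _ _ E) as [l [[Ea Eb] | [Ea Eb]]]; subst.
  -
    rewrite <- app_assoc in Hw, Hev |- *.
    apply Forall_app in Hw as [Hu1 Hw']. apply Forall_app in Hw' as [Hl Ht0].
    rewrite !eval_app in Hev.
    destruct (le_lt_dec (2 * length l) (length (u1 ++ l ++ t0))) as [Hle|Hlt].
    + exists (invw l). split; [apply Hwi; auto|]. split; [|rewrite length_invw; auto].
      rewrite eval_app, <- gmulA, <- (gmulA G (eval G u1)), eval_invw, mul1_r; auto.
    + exists (t0 ++ u1). split; [apply Forall_app; auto|]. split.
      * rewrite eval_app, eval_app, gmulA. f_equal.
        rewrite <- gmulA, <- (gmulA G (eval G u1)), Hev, mul1_r; auto.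
      * rewrite !length_app in *. lia.
  -
    apply Forall_app in Hw as [Hu0 Hw']. apply Forall_app in Hw' as [Hl Ht1].
    rewrite !eval_app in Hev.
    destruct (le_lt_dec (2 * length l) (length (u0 ++ l ++ t1))) as [Hle|Hlt].
    + exists l. split; auto. split; auto. rewrite eval_app, gmulA; auto.
    + exists (invw u0 ++ invw t1). split; [apply Forall_app; split; apply Hwi; auto|]. split.
      * assert (Hv : eval G u0 ⋅ eval G l = eval G (invw t1)).
        { apply (inv_unique _ (eval G t1)). rewrite <- gmulA; auto. apply eval_invw. }
        rewrite eval_app, eval_app, Hv, gmulA, <- (gmulA G g), eval_invw, mul1_r; auto.
      * rewrite !length_app, !length_invw in *. lia.
Qed.

Lemma desc n w : symmetric_set G S -> word_in G S w -> ~ in_ball G S (INR n) (eval G w) ->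
  exists t, ballN (Datatypes.S n) t /\
    connected_in G S (fun g => ~ in_ball G S (INR n) g /\ in_ball G S (INR (length w)) g) t (eval G w).
Proof.
  intro Hsym. induction w as [|s w IH] using rev_ind; intros Hw Hnb.
  - exfalso. apply Hnb. apply ballN_iff. exists []; split; [constructor|split; [reflexivity| simpl; lia]].
  - apply Forall_app in Hw as [Hw Hs]. inversion Hs; subst.
    assert (Ee : eval G (w ++ [s]) = eval G w ⋅ s) by (rewrite eval_app, eval_cons, eval_nil, mul1_r; auto).
    assert (Hb2 : in_ball G S (INR (length (w ++ [s]))) (eval G w ⋅ s)).
    { exists (w ++ [s]); repeat split; auto. apply Forall_app; auto. apply Rle_refl. }
    rewrite Ee in Hnb |- *.
    destruct (classic (in_ball G S (INR n) (eval G w))) as [Hin|Hout].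
    + exists (eval G w ⋅ s). split.
      * apply ballN_iff in Hin. apply (ball_adj n (eval G w)); [exact Hsym | exact Hin | left; exists s; auto].
      * apply conn_refl; auto.
    + destruct (IH Hw Hout) as [t [Ht Hc]]. exists t. split; auto.
      eapply conn_step.
      * eapply conn_mono; [|exact Hc]. intros v [Hv1 Hv2]. split; auto.
        eapply in_ball_mono; [|exact Hv2]. apply le_INR. rewrite length_app; lia.
      * split; [|split; [split; auto| left; exists s; auto]].
        destruct Hc as [_ [[Hc1 Hc2] _]]. split; auto.
        eapply in_ball_mono; [|exact Hc2]. apply le_INR. rewrite length_app; lia.
Qed.

Lemma pres_inv (f : G -> G -> bool) (Rel : list (list G)) w1 w2 :
  (forall a b, f a b = f b a) -> (forall rel g, In rel Rel -> par f g rel = false) ->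
  (forall rel, In rel Rel -> eval G rel = e) ->
  pres_step G S Rel w1 w2 -> forall g, par f g w1 = par f g w2.
Proof.
  intros Hf Hp He Hs g. destruct Hs as [u v s Hs | u v rel Hr].
  - rewrite !par_app.
    assert (E1 : eval G [s; ginv G s] = e) by (rewrite !eval_cons, eval_nil, mul1_r; apply mulV_r).
    rewrite E1, mul1_r. f_equal.
    rewrite !par_cons, par_nil.
    rewrite <- (gmulA G (g ⋅ eval G u) s (ginv G s)), mulV_r, mul1_r, (Hf (g ⋅ eval G u ⋅ s)).
    destruct (f _ _), (par _ _ v); reflexivity.
  - rewrite !par_app, (He rel Hr), mul1_r, (Hp rel _ Hr). reflexivity.
Qed.

Lemma crst_inv (f : G -> G -> bool) (Rel : list (list G)) w1 w2 :
  (forall a b, f a b = f b a) -> (forall rel g, In rel Rel -> par f g rel = false) ->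
  (forall rel, In rel Rel -> eval G rel = e) ->
  clos_refl_sym_trans _ (pres_step G S Rel) w1 w2 -> forall g, par f g w1 = par f g w2.
Proof. intros Hf Hp He H. induction H as [a b Hab| a | a b Hab IH | a b c Hab IH1 Hbc IH2]; intro g.
  - eapply pres_inv; eauto.
  - reflexivity.
  - rewrite IH; auto.
  - rewrite IH1; auto. Qed.


Section Parity.
Variables (n : nat) (r : R) (x x' : G).
Hypothesis Hsym : symmetric_set G S.

Definition U v := connected_in G S (ball_compl G S n) x v.
Definition A' v := in_ball G S (INR n + r) v /\ U v.
Definition Vfar v := U v /\ ~ in_ball G S (INR n + r) v.
Definition C v := connected_in G S A' x' v.
Definition fF a b := dec ((C a /\ Vfar b) \/ (Vfar a /\ C b)).

Lemma fF_sym a b : fF a b = fF b a.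
Proof. unfold fF. apply dec_iff. tauto. Qed.

Lemma fF_far a b : ~ Vfar a -> ~ Vfar b -> fF a b = false.
Proof. intros. unfold fF. apply dec_f. tauto. Qed.

Lemma C_A a : C a -> A' a.
Proof. intros [_ [H _]]; auto. Qed.

Lemma fF_step a b : U a -> U b -> (adj G S a b \/ adj G S b a) ->
  fF a b = xorb (dec (C a)) (dec (C b)).
Proof.
  intros Ua Ub Had.
  destruct (classic (in_ball G S (INR n + r) a)) as [Ba|Ba];
  destruct (classic (in_ball G S (INR n + r) b)) as [Bb|Bb].
  - rewrite fF_far by (unfold Vfar; tauto).
    destruct (classic (C a)) as [Ca|Ca].
    + assert (Cb : C b). { eapply conn_step; [exact Ca|]. split; [split; auto|split; [split; auto|auto]]. }
      rewrite (dec_t _ Ca), (dec_t _ Cb); auto.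
    + assert (Cb : ~ C b).
      { intro Cb. apply Ca. eapply conn_step; [exact Cb|]. split; [split; auto|split; [split; auto|tauto]]. }
      rewrite (dec_f _ Ca), (dec_f _ Cb); auto.
  - assert (Cb : ~ C b) by (intro H; apply C_A in H; destruct H; tauto).
    rewrite (dec_f _ Cb). destruct (classic (C a)) as [Ca|Ca].
    + rewrite (dec_t _ Ca). unfold fF. apply dec_t. left; split; auto. split; auto.
    + rewrite (dec_f _ Ca). unfold fF; apply dec_f; tauto.
  - assert (Ca : ~ C a) by (intro H; apply C_A in H; destruct H; tauto).
    rewrite (dec_f _ Ca). destruct (classic (C b)) as [Cb|Cb].
    + rewrite (dec_t _ Cb). unfold fF. apply dec_t. right; split; auto. split; auto.
    + rewrite (dec_f _ Cb). unfold fF; apply dec_f; tauto.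
  - assert (Ca : ~ C a) by (intro H; apply C_A in H; destruct H; tauto).
    assert (Cb : ~ C b) by (intro H; apply C_A in H; destruct H; tauto).
    rewrite (dec_f _ Ca), (dec_f _ Cb). unfold fF. apply dec_f. tauto.
Qed.

Lemma par_zero w : forall g, (forall u t, w = u ++ t -> ~ Vfar (g ⋅ eval G u)) -> par fF g w = false.
Proof. induction w as [|s w IH]; intros g H; rewrite ?par_nil, ?par_cons; auto.
  rewrite fF_far.
  - rewrite IH; auto. apply (pre_shift (fun v => ~ Vfar v)); auto.
  - apply (pre_0 (fun v => ~ Vfar v) g (s :: w)); auto.
  - apply (pre_1 (fun v => ~ Vfar v) g s w); auto.
Qed.

Lemma inv_zero w : forall h, (forall u t, w = u ++ t -> ~ Vfar (h ⋅ eval G u)) ->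
  par fF (h ⋅ eval G w) (invw w) = false.
Proof. induction w as [|s w IH]; intros h H; simpl invw.
  - apply par_nil.
  - rewrite eval_cons, gmulA, par_app, IH.
    2: apply (pre_shift (fun v => ~ Vfar v)); auto.
    rewrite <- (gmulA G (h ⋅ s)), eval_invw, mul1_r, par_cons, par_nil.
    rewrite <- gmulA, mulV_r, mul1_r, fF_far; auto.
    apply (pre_1 (fun v => ~ Vfar v) h s w); auto.
    apply (pre_0 (fun v => ~ Vfar v) h (s :: w)); auto.
Qed.

Lemma U_step a b : ~ in_ball G S (INR n) a -> ~ in_ball G S (INR n) b -> adj G S a b -> (U a <-> U b).
Proof. intros Ha Hb Had; unfold U; split; intro H.
  - eapply conn_step; [exact H|]. split; [exact Ha|split; [exact Hb|left; auto]].
  - eapply conn_step; [exact H|]. split; [exact Hb|split; [exact Ha|right; auto]].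
Qed.

Lemma walk_U_const w : forall g, word_in G S w ->
  (forall u t, w = u ++ t -> ~ in_ball G S (INR n) (g ⋅ eval G u)) ->
  forall u t, w = u ++ t -> (U g <-> U (g ⋅ eval G u)).
Proof. induction w as [|s w IH]; intros g Hw H u t E.
  - symmetry in E. apply app_eq_nil in E as [-> ->]. rewrite eval_nil, mul1_r; tauto.
  - inversion Hw; subst.
    destruct (prefix_cons s w u t E) as [-> | [u' [-> Ew]]].
    + rewrite eval_nil, mul1_r; tauto.
    + rewrite eval_cons, gmulA.
      rewrite <- (IH (g ⋅ s) H3 (pre_shift (fun v => ~ in_ball G S (INR n) v) g s w H) u' t Ew).
      apply U_step.
      * apply (pre_0 (fun v => ~ in_ball G S (INR n) v) g (s :: w)); auto.
      * apply (pre_1 (fun v => ~ in_ball G S (INR n) v) g s w); auto.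
      * exists s; auto.
Qed.

Lemma walk_par w : forall g, word_in G S w ->
  (forall u t, w = u ++ t -> U (g ⋅ eval G u)) ->
  par fF g w = xorb (dec (C g)) (dec (C (g ⋅ eval G w))).
Proof. induction w as [|s w IH]; intros g Hw H.
  - rewrite par_nil, eval_nil, mul1_r, xorb_aa; auto.
  - inversion Hw; subst. rewrite par_cons, eval_cons, gmulA.
    rewrite IH; auto. 2: apply (pre_shift U); auto.
    rewrite fF_step. apply xorb3.
    apply (pre_0 U g (s :: w)); auto.
    apply (pre_1 U g s w); auto.
    left; exists s; auto.
Qed.

Lemma relator_par rel : word_in G S rel -> eval G rel = e -> INR (length rel) / 2 < r ->
  forall g, par fF g rel = false.
Proof.
  intros Hw Hev Hlen g.
  destruct (classic (exists u t, rel = u ++ t /\ in_ball G S (INR n) (g ⋅ eval G u))) as [[u0 [t0 [E0 Hz]]]|Hno].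
  - apply par_zero. intros u t E [_ Hnb]. apply Hnb.
    destruct (loop_dist rel g u0 t0 u t Hsym Hw Hev E0 E) as [m [Hm [Hzm Hl]]].
    apply ballN_iff in Hz. destruct Hz as [c [Hc1 [Hc2 Hc3]]].
    exists (c ++ m). split; [apply Forall_app; auto|]. split.
    + rewrite eval_app, Hc2; auto.
    + rewrite length_app, plus_INR.
      apply le_INR in Hc3. apply le_INR in Hl. rewrite mult_INR in Hl. simpl (INR 2) in Hl. lra.
  - assert (Hno' : forall u t, rel = u ++ t -> ~ in_ball G S (INR n) (g ⋅ eval G u)).
    { intros u t E Hb. apply Hno. eauto. }
    destruct (classic (U g)) as [Ug|Ug].
    + rewrite walk_par; auto. rewrite Hev, mul1_r, xorb_aa; auto.
      intros u t E. apply (walk_U_const rel g Hw Hno' u t E); auto.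
    + apply par_zero. intros u t E [HU _]. apply Ug.
      apply (walk_U_const rel g Hw Hno' u t E); auto.
Qed.

Lemma path_par (P : G -> Prop) a b : (forall v, P v -> U v) ->
  clos_refl_trans _ (stp P) a b ->
  exists w, word_in G S w /\ a ⋅ eval G w = b /\ par fF a w = xorb (dec (C a)) (dec (C b)).
Proof.
  intros HPU H. apply clos_rt_rt1n in H. induction H as [a | a a1 b Hs Hr IH].
  - exists []. split; [constructor|]. rewrite eval_nil, mul1_r, par_nil, xorb_aa; auto.
  - destruct IH as [w [Hw [Ew Hpw]]]. destruct Hs as [Pa [Pa1 Had]].
    assert (Hx : exists s, In s S /\ a ⋅ s = a1).
    { destruct Had as [Had|Had]. exact Had. apply adj_sym_mul; auto. }
    destruct Hx as [s [Hs Es]].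
    exists (s :: w). split; [constructor; auto|]. split.
    + rewrite eval_cons, gmulA, Es; auto.
    + rewrite par_cons, Es, Hpw, fF_step; auto. apply xorb3.
Qed.

Lemma prefix_ok a : (1 <= r) -> word_in G S a -> (length a <= Datatypes.S n)%nat ->
  forall u t, a = u ++ t -> ~ Vfar (e ⋅ eval G u).
Proof. intros Hr Ha Hl u t E [_ Hnb]. apply Hnb. rewrite gmul1.
  exists u. subst. apply Forall_app in Ha as [Hu _]. split; auto. split; auto.
  rewrite length_app in Hl. assert (Hl' : (length u <= Datatypes.S n)%nat) by lia.
  apply le_INR in Hl'. rewrite S_INR in Hl'. lra.
Qed.

Lemma parity_main (Rel : list (list G)) y' : 1 <= r ->
  (forall rel, In rel Rel -> word_in G S rel /\ eval G rel = e) ->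
  (forall rel, In rel Rel -> INR (length rel) / 2 < r) ->
  (forall w, word_in G S w -> eval G w = e -> clos_refl_sym_trans _ (pres_step G S Rel) w []) ->
  A' x' -> A' y' -> ballN (Datatypes.S n) x' -> ballN (Datatypes.S n) y' ->
  connected_in G S A' x' y'.
Proof.
  intros Hr Hrel Hlen Hvk Ax Ay Bx By.
  apply NNPP; intro Hnc.
  destruct Ax as [Hxb HUx]. destruct Ay as [Hyb HUy].
  assert (Hp : connected_in G S (fun v => ball_compl G S n v /\ U v) x' y').
  { apply conn_restrict. eapply conn_trans; [apply conn_sym; exact HUx| exact HUy].
    intros v _ Hv. unfold U. eapply conn_trans; [exact HUy|]. apply conn_sym; auto. }
  destruct Hp as [_ [_ Hp]].
  destruct (path_par (fun v => ball_compl G S n v /\ U v) x' y') as [pw [Hpw [Epw Ppw]]].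
  { intros v [_ H]; auto. }
  { exact Hp. }
  destruct Bx as [a [Ha1 [Ha2 Ha3]]]. destruct By as [b [Hb1 [Hb2 Hb3]]].
  assert (Hwi : word_in G S (invw b)).
  { clear -Hsym Hb1. induction b as [|s v IH]; simpl. constructor. inversion Hb1; subst.
    apply Forall_app; split; [apply IH; auto | constructor; [apply Hsym; auto | constructor]]. }
  set (L := a ++ (pw ++ invw b)).
  assert (HL : word_in G S L) by (apply Forall_app; split; auto; apply Forall_app; auto).
  assert (EL : eval G L = e).
  { unfold L. rewrite !eval_app, Ha2, gmulA, Epw, <- Hb2. apply eval_invw. }
  assert (Hz := crst_inv fF Rel L [] fF_sym
                  (fun rel g Hin => relator_par rel (proj1 (Hrel rel Hin)) (proj2 (Hrel rel Hin)) (Hlen rel Hin) g)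
                  (fun rel Hin => proj2 (Hrel rel Hin)) (Hvk L HL EL) e).
  rewrite par_nil in Hz. unfold L in Hz.
  rewrite par_app, par_zero in Hz. 2: apply (prefix_ok a); auto.
  rewrite gmul1, Ha2, par_app, Ppw, Epw in Hz.
  rewrite <- Hb2, <- (gmul1 G (eval G b)), inv_zero in Hz. 2: apply (prefix_ok b); auto.
  assert (Cx : C x'). { apply conn_refl. split; auto. }
  rewrite gmul1, Hb2 in Hz. rewrite (dec_t _ Cx), (dec_f (C y') Hnc) in Hz. discriminate.
Qed.

End Parity.

End Cay.
End Grp.

Theorem mainTheorem1 (G : group) (S : list G) (Rel : list (list G)) (r : R) :
  presentation G S Rel ->
  one_ended G S ->
  0 < r ->
  (forall w, In w Rel -> INR (length w) / 2 < r) ->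
  connected_spheres G S r.
Proof.
  intros [Hsym [_ [Hrel Hvk]]] Hoe Hr0 Hlen n x y [Hxb Hxi] [Hyb Hyi].
  destruct (Rlt_or_le r 1) as [Hr1|Hr1].
  { exfalso. destruct Hxi as [Hxn _]. apply Hxn. destruct Hxb as [w [H1 [H2 H3]]].
    exists w; split; auto; split; auto. apply le_INR.
    destruct (le_lt_dec (length w) n) as [Hl|Hl]; auto.
    apply le_INR in Hl. rewrite S_INR in Hl. lra. }
  assert (Uxy : connected_in G S (ball_compl G S n) x y) by (apply uniq; auto).
  assert (Hd : forall z, in_ball G S (INR n + r) z -> in_inf_comp G S n z -> U G S n x z ->
            exists t, ballN G S (Datatypes.S n) t /\ connected_in G S (A' G S n r x) t z).
  { intros z Hzb [Hzn _] HUz. destruct Hzb as [w [Hw1 [Hw2 Hw3]]]. subst z.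
    destruct (desc G S n w Hsym Hw1 Hzn) as [t [Ht Hc]]. exists t. split; auto.
    assert (Hc' : connected_in G S (fun g => ball_compl G S n g /\ in_ball G S (INR n + r) g) t (eval G w)).
    { eapply conn_mono; [|exact Hc]. intros v [Hv1 Hv2]. split; auto. eapply in_ball_mono; [|exact Hv2]. auto. }
    apply conn_restrict with (Q := U G S n x) in Hc'.
    - eapply conn_mono; [|exact Hc']. intros v [[_ H1] H2]. split; auto.
    - intros v _ Hv. unfold U. eapply conn_trans; [exact HUz|]. apply conn_sym.
      eapply conn_mono; [|exact Hv]. intros q [Hq _]; auto. }
  destruct (Hd x Hxb Hxi) as [t1 [Ht1 Hc1]].
  { unfold U. apply conn_refl. apply Hxi. }
  destruct (Hd y Hyb Hyi Uxy) as [t2 [Ht2 Hc2]].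
  assert (Hm : connected_in G S (A' G S n r x) t1 t2).
  { apply (parity_main G S n r x t1 Hsym Rel t2);
      [exact Hr1 | exact Hrel | exact Hlen | exact Hvk | exact (proj1 Hc1) | exact (proj1 Hc2) | exact Ht1 | exact Ht2]. }
  assert (Hall : connected_in G S (A' G S n r x) x y).
  { eapply conn_trans; [apply conn_sym; exact Hc1|]. eapply conn_trans; [exact Hm| exact Hc2]. }
  eapply conn_mono; [|exact Hall]. intros v [Hv1 Hv2]. split; auto.
  split. destruct Hv2 as [_ [H _]]; exact H.
  intros [l Hl]. destruct Hxi as [_ Hinf]. apply Hinf. exists l. intros g Hg. apply Hl.
  eapply conn_trans; [apply conn_sym; exact Hv2| exact Hg].
Qed.
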